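(* Let $n\ge 2$ and let $\sigma_{n-1}=c_{n-1}-\lfloor\frac{n-1}{2}\rfloor$, where $c_{n-1}=\binom{n-1}{2}$. As elements of $R/J_n$: if $n$ is even, then $x_{nn}^{\sigma_{n-1}}\,p^+_{n}=p_n$; if $n$ is odd, then for every $i\in[n]$, $x_{nn}^{\sigma_{n-1}+1}\,p^+_{n,i}=x_{in}\,p_n$.
   Context: Let $\mathbbm{k}$ be a field, $[n]=\{1,\dots,n\}$, $R=\mathbbm{k}[x_{ij}:1\le i\le j\le n]$ with $x_{ij}=x_{ji}$; exponent vectors in $\mathbb{N}^{\binom{n+1}{2}}$ with basis $e_{ij}=e_{ji}$. $V_n$ is the $n\times\binom{n+1}{2}$ matrix whose column indexed by $jk$ is $e_j+e_k\in\mathbb{Z}^n$; for $\mathbf b\in\mathbb{N}^n$, $V_n^{-1}[\mathbf b]=\{u\in\mathbb{N}^{\binom{n+1}{2}}:V_nu=\mathbf b\}$. $J_n$ is generated by the principal $2$-minors $x_{ii}x_{jj}-x_{ij}^2$. With $[ij|kl]:=e_{ik}+e_{jl}-e_{il}-e_{jk}$, $L'_n$ is the lattice generated by the $[ij|ij]$; two points of a fiber are equivalent if their difference lies in $L'_n$ (equivalent monomials are equal in $R/J_n$). Define $p_n=\prod_{1\le i<j\le n-1}(x_{ij}x_{nn}+x_{in}x_{jn})$. If $n$ is odd, $p^+_{n,i}\in R/J_n$ is the sum of $x^{\mathbf a}$ over the equivalence classes $\mathbf a$ of $V_n^{-1}[(n-2,\dots,n-2)+e_i]$ modulo $L'_n$;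 if $n$ is even, $p^+_n\in R/J_n$ is the sum of $x^{\mathbf a}$ over the equivalence classes of $V_n^{-1}[(n-2,\dots,n-2)]$ modulo $L'_n$. *)

(* Defs.v *)
From HB Require Import structures.
From mathcomp Require Import all_boot all_order all_algebra.
From mathcomp Require Import mpoly.
Set Implicit Arguments. Unset Strict Implicit. Unset Printing Implicit Defensive.
Import GRing.Theory.
Local Open Scope ring_scope.

(* Index set {(i,j) : 1 <= i <= j <= n}, written 0-based as pairs of 'I_n. *)
Definition upair (n : nat) := {p : 'I_n * 'I_n | (p.1 <= p.2)%N}.

(* R = k[x_ij : i <= j], variables indexed via enum_rank of upair n *)
Definition Rn (k : fieldType) (n : nat) := {mpoly k[#|{: upair n}|]}.

Definition upair_of (n : nat) (i j : 'I_n) : upair n :=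
  match leqP i j with
  | LeqNotGtn h => exist _ (i, j) h
  | GtnNotLeq h => exist _ (j, i) (ltnW h)
  end.

(* x_ij = x_ji *)
Definition xv (k : fieldType) (n : nat) (i j : 'I_n) : Rn k n :=
  'X_(enum_rank (upair_of i j)).

(* x_ij for natural-number indices (0 if out of range) *)
Definition xN (k : fieldType) (n : nat) (i j : nat) : Rn k n :=
  match @insub _ (fun m => (m < n)%N) 'I_n i, @insub _ (fun m => (m < n)%N) 'I_n j with
  | Some i', Some j' => xv k i' j'
  | _, _ => 0
  end.

Definition expv (n : nat) := {ffun upair n -> nat}.
Definition mono (k : fieldType) (n : nat) (u : expv n) : Rn k n :=
  \prod_(p : upair n) ('X_(enum_rank p)) ^+ u p.

(* u in V_n^{-1}[b]: column jk of V_n is e_j + e_k *)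
Definition in_fiber (n : nat) (b : 'I_n -> nat) (u : expv n) : Prop :=
  forall r : 'I_n,
    (\sum_(p : upair n) u p * (((val p).1 == r) + ((val p).2 == r)))%N = b r.

(* the generator [ij|ij] = e_ii + e_jj - e_ij - e_ji = e_ii + e_jj - 2 e_ij,
   evaluated at coordinate q *)
Definition gen_ij (n : nat) (p q : upair n) : int :=
  ((val q == ((val p).1, (val p).1)) + (val q == ((val p).2, (val p).2)))%:Z
  - 2 * (val q == val p)%:Z.

(* u - v lies in L'_n = Z-span of the [ij|ij], i < j *)
Definition equivL (n : nat) (u v : expv n) : Prop :=
  exists c : upair n -> int,
    forall q : upair n,
      (u q)%:Z - (v q)%:Z
      = \sum_(p : upair n | ((val p).1 < (val p).2)%N) c p * gen_ij p q.

Definition reps (n : nat) (b : 'I_n -> nat) (S : seq (expv n)) : Prop :=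
  [/\ forall s, s \in S -> in_fiber b s,
      forall u, in_fiber b u -> exists2 s, s \in S & equivL u s
    & forall a c : nat, (a < size S)%N -> (c < size S)%N -> a <> c ->
        ~ equivL (nth [ffun => 0%N] S a) (nth [ffun => 0%N] S c)].

Definition inJ (k : fieldType) (n : nat) (f : Rn k n) : Prop :=
  exists c : 'I_n -> 'I_n -> Rn k n,
    f = \sum_(i < n) \sum_(j < n | (i < j)%N)
          c i j * (xv k i i * xv k j j - xv k i j ^+ 2).

Definition eqJ (k : fieldType) (n : nat) (f g : Rn k n) : Prop := inJ (f - g).

(* p_n = prod_{1 <= i < j <= n-1} (x_ij x_nn + x_in x_jn)  (0-based: i < j < n-1) *)
Definition pn (k : fieldType) (n : nat) : Rn k n :=
  \prod_(i < n) \prod_(j < n | (i < j)%N && (j < n.-1)%N)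
     (xv k i j * xN k n n.-1 n.-1 + xN k n i n.-1 * xN k n j n.-1).

Definition psum (k : fieldType) (n : nat) (S : seq (expv n)) : Rn k n :=
  \sum_(s <- S) mono k s.

(* Main.v *)
Require Import Defs.
From HB Require Import structures.
From mathcomp Require Import all_boot all_order all_algebra.
From mathcomp Require Import mpoly zify ring.
Set Implicit Arguments. Unset Strict Implicit. Unset Printing Implicit Defensive.
Import GRing.Theory.
Local Open Scope ring_scope.

Section Basic.
Variable k : fieldType.
Variable n : nat.
Local Notation R := (Rn k n).

Lemma addvE (u v : expv n) q : (u + v) q = (u q + v q)%N.
Proof. by rewrite ffunE. Qed.
Lemma zerovE q : (0 : expv n) q = 0%N.
Proof. by rewrite ffunE. Qed.
Lemma sumvE (I : Type) (r : seq I) (P : pred I) (F : I -> expv n) q :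
  (\sum_(i <- r | P i) F i) q = (\sum_(i <- r | P i) F i q)%N.
Proof.
by apply: (big_morph (fun u : expv n => u q)) => [u v|]; rewrite ?addvE ?zerovE.
Qed.

Lemma mulnvE (u : expv n) c q : (u *+ c) q = (u q * c)%N.
Proof.
elim: c => [|c IH]; first by rewrite mulr0n zerovE muln0.
by rewrite mulrS addvE IH mulnS.
Qed.

Lemma inJ0 : inJ (0 : R).
Proof. exists (fun _ _ => 0); rewrite big1 // => i _; rewrite big1 // => j _; by rewrite mul0r. Qed.

Lemma inJD (f g : R) : inJ f -> inJ g -> inJ (f + g).
Proof.
move=> [c ->] [d ->]; exists (fun i j => c i j + d i j).
rewrite -big_split /=; apply: eq_bigr => i _; rewrite -big_split /=.
by apply: eq_bigr => j _; rewrite mulrDl.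
Qed.

Lemma inJM (r f : R) : inJ f -> inJ (r * f).
Proof.
move=> [c ->]; exists (fun i j => r * c i j).
rewrite mulr_sumr; apply: eq_bigr => i _; rewrite mulr_sumr.
by apply: eq_bigr => j _; rewrite mulrA.
Qed.

Lemma inJN (f : R) : inJ f -> inJ (- f).
Proof. by move=> h; rewrite -mulN1r; apply: inJM. Qed.

Lemma eqJ_refl (f : R) : eqJ f f.
Proof. by rewrite /eqJ subrr; apply: inJ0. Qed.
Lemma eqJ_sym (f g : R) : eqJ f g -> eqJ g f.
Proof. by rewrite /eqJ => h; rewrite -opprB; apply: inJN. Qed.
Lemma eqJ_trans (f g h : R) : eqJ f g -> eqJ g h -> eqJ f h.
Proof. rewrite /eqJ => a b; have := inJD a b; by rewrite addrA subrK. Qed.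
Lemma eqJD (f g f' g' : R) : eqJ f f' -> eqJ g g' -> eqJ (f + g) (f' + g').
Proof. rewrite /eqJ => a b; have := inJD a b. congr inJ; ring. Qed.
Lemma eqJMl (r f g : R) : eqJ f g -> eqJ (r * f) (r * g).
Proof. rewrite /eqJ => a; have := inJM r a. congr inJ; ring. Qed.
Lemma eqJM (f g f' g' : R) : eqJ f f' -> eqJ g g' -> eqJ (f * g) (f' * g').
Proof.
move=> a b; apply: (@eqJ_trans _ (f * g')); first exact: eqJMl.
rewrite (mulrC f) (mulrC f'); exact: eqJMl.
Qed.
Lemma eqJ_sum (I : Type) (r : seq I) (F G : I -> R) :
  (forall i, eqJ (F i) (G i)) -> eqJ (\sum_(i <- r) F i) (\sum_(i <- r) G i).
Proof.
move=> h; elim: r => [|a r IH]; first by rewrite !big_nil; apply: eqJ_refl.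
by rewrite !big_cons; apply: eqJD.
Qed.
Lemma eqJ_eq (f g : R) : f = g -> eqJ f g.
Proof. by move=> ->; apply: eqJ_refl. Qed.

Definition uvec (p : upair n) : expv n := [ffun q => (q == p) : nat].

Lemma uvecE p q : uvec p q = (q == p) :> nat.
Proof. by rewrite ffunE. Qed.

Lemma monoD (u v : expv n) : mono k (u + v) = mono k u * mono k v.
Proof.
rewrite /mono -big_split /=; apply: eq_bigr => p _; by rewrite addvE exprD.
Qed.
Lemma mono0 : mono k (0 : expv n) = 1.
Proof. rewrite /mono big1 // => p _; by rewrite zerovE expr0. Qed.
Lemma mono_sum (I : Type) (r : seq I) (P : pred I) (F : I -> expv n) :
  mono k (\sum_(i <- r | P i) F i) = \prod_(i <- r | P i) mono k (F i).
Proof. exact: (big_morph (@mono k n) monoD mono0). Qed.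
Lemma mono_uvec p : mono k (uvec p) = 'X_(enum_rank p).
Proof.
rewrite /mono (bigD1 p) //= big1 => [|q /negbTE qp]; first by rewrite ffunE eqxx mulr1 expr1.
by rewrite ffunE qp expr0.
Qed.
Lemma monoX (c : nat) (u : expv n) : mono k (u *+ c) = mono k u ^+ c.
Proof.
elim: c => [|c IH]; first by rewrite mulr0n mono0 expr0.
by rewrite mulrS monoD IH exprS.
Qed.

End Basic.
Section Red.
Variable k : fieldType.
Variable n : nat.
Local Notation R := (Rn k n).

Definition off (p : upair n) : bool := ((val p).1 < (val p).2)%N.
Definition dg (r : 'I_n) : upair n := upair_of r r.
Definition ind (r : 'I_n) (p : upair n) : nat := (((val p).1 == r) + ((val p).2 == r))%N.
Definition fib (u : expv n) (r : 'I_n) : nat := (\sum_(p : upair n) u p * ind r p)%N.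

Lemma upair_ofK (p : upair n) : upair_of (val p).1 (val p).2 = p.
Proof.
case: p => [[i j] h]; rewrite /upair_of /=; case: leqP => h2; apply: val_inj => //=.
by move: h; rewrite leqNgt h2.
Qed.

Lemma upair_of_val (i j : 'I_n) : (i <= j)%N -> val (upair_of i j) = (i, j).
Proof. by rewrite /upair_of; case: leqP => //; rewrite leqNgt => ->. Qed.

Lemma upair_ofC (i j : 'I_n) : upair_of i j = upair_of j i.
Proof.
rewrite /upair_of; case: leqP => h1; case: leqP => h2; apply: val_inj => //=.
- have e : i = j by apply: val_inj; apply/eqP; rewrite eqn_leq h1 h2.
  by rewrite e.
- by have := ltn_trans h1 h2; rewrite ltnn.
Qed.

Lemma dg_val r : val (dg r) = (r, r).
Proof. by rewrite /dg upair_of_val. Qed.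

Lemma xv_mono (i j : 'I_n) : xv k i j = mono k (uvec (upair_of i j)).
Proof. by rewrite mono_uvec. Qed.

Lemma inJ_gen (i j : 'I_n) : (i < j)%N -> inJ (xv k i i * xv k j j - xv k i j ^+ 2).
Proof.
move=> hij.
exists (fun a b => ((a == i) && (b == j))%:R).
rewrite (bigD1 i) //= (bigD1 j) ?hij //= (eqxx i) (eqxx j) /= mul1r.
rewrite big1 ?add0r; last by move=> b /andP [_ bj]; rewrite (negbTE bj) mul0r.
rewrite big1 ?addr0 // => a ai; rewrite big1 // => b _; by rewrite (negbTE ai) mul0r.
Qed.

Lemma sqJ (p : upair n) : off p ->
  eqJ (mono k (uvec p *+ 2)) (mono k (uvec (dg (val p).1) + uvec (dg (val p).2))).
Proof.
move=> hp; rewrite monoX monoD !mono_uvec.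
have := inJN (inJ_gen hp).
rewrite /eqJ /xv /dg upair_ofK; congr inJ; ring.
Qed.

Lemma fibD (u v : expv n) r : fib (u + v) r = (fib u r + fib v r)%N.
Proof. rewrite /fib -big_split /=; apply: eq_bigr => p _; by rewrite addvE mulnDl. Qed.

Lemma fib_uvec p r : fib (uvec p) r = ind r p.
Proof.
rewrite /fib (bigD1 p) //= big1 => [|q /negbTE qp]; first by rewrite ffunE eqxx mul1n addn0.
by rewrite ffunE qp.
Qed.

Lemma fibMn (u : expv n) c r : fib (u *+ c) r = (fib u r * c)%N.
Proof.
elim: c => [|c IH]; first by rewrite mulr0n muln0 /fib big1 // => p _; rewrite zerovE.
by rewrite mulrS fibD IH mulnS addnC.
Qed.

Lemma ind_dg a r : ind r (dg a) = ((a == r) * 2)%N.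
Proof. rewrite /ind dg_val /=; by case: (a == r). Qed.

Definition offsum (u : expv n) := (\sum_(p | off p) u p)%N.

Lemma reduce (u : expv n) : exists v : expv n,
  [/\ eqJ (mono k u) (mono k v), (forall r, fib v r = fib u r) &
      (forall p, off p -> v p = u p %% 2)%N].
Proof.
move: {2}(offsum u) (leqnn (offsum u)) => N; elim: N u => [|N IH] u hN.
  exists u; split => //; first exact: eqJ_refl.
  move=> p hp; move: hN; rewrite /offsum (bigD1 p) //= leqn0 addn_eq0 => /andP [/eqP -> _].
  by [].
case: (pickP (fun p => off p && (2 <= u p)%N)) => [p /andP [hp hu] | hno]; last first.
  exists u; split => //; first exact: eqJ_refl.
  move=> q hq; have := hno q; rewrite hq /= => /negbT; rewrite -ltnNge => h.
  by rewrite modn_small.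
set u' := [ffun q => u q - (q == p).*2]%N.
have eu : u = u' + uvec p *+ 2.
  apply/ffunP => q; rewrite addvE mulnvE uvecE ffunE.
  case: eqP => [->|_]; last by rewrite subn0 addn0.
  by rewrite subnK.
set u2 := u' + (uvec (dg (val p).1) + uvec (dg (val p).2)).
have hoff : forall q, off q -> u2 q = u' q.
  move=> q hq; rewrite addvE addvE !uvecE.
  have ne : forall a, (q == dg a) = false.
    move=> a; apply/negbTE/eqP => e; move: hq; rewrite /off e dg_val /=; by rewrite ltnn.
  by rewrite !ne addn0.
have hM : offsum u = (offsum u2 + 2)%N.
  rewrite /offsum (eq_bigr _ hoff) eu.
  rewrite (eq_bigr (fun q => u' q + (q == p) * 2)%N); last first.
    by move=> q _; rewrite addvE mulnvE uvecE.
  rewrite big_split /=; congr addn; rewrite (bigD1 p) //= eqxx big1 //.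
  by move=> q /andP [_ /negbTE ->].
have hlt : (offsum u2 <= N)%N by move: hN; rewrite hM addn2 ltnS => /ltnW.
have [v [h1 h2 h3]] := IH u2 hlt.
exists v; split.
- apply: eqJ_trans h1.
  rewrite {1}eu /u2 monoD [mono k (u' + _)]monoD; apply: eqJMl; exact: sqJ.
- move=> r; rewrite h2 eu /u2 !fibD !fib_uvec !ind_dg /ind.
  by congr addn; case: (_ == r); case: (_ == r).
- move=> q hq; rewrite h3 // hoff // eu addvE mulnvE uvecE.
  by case: (q == p); rewrite ?muln0 ?addn0 // mul1n modnDr.
Qed.

End Red.
Section Fib.
Variable n : nat.

Lemma not_off_dg (p : upair n) : ~~ off p -> p = dg (val p).1.
Proof.
case: p => [[i j] h] /=; rewrite /off /= -leqNgt => h2; apply: val_inj.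
rewrite dg_val /=; congr pair; apply: val_inj; apply/eqP; by rewrite eqn_leq h h2.
Qed.

Lemma dg_not_off (a : 'I_n) : ~~ off (dg a).
Proof. by rewrite /off dg_val ltnn. Qed.

Lemma fib_split (u : expv n) r :
  fib u r = (u (dg r) * 2 + \sum_(p | off p) u p * ind r p)%N.
Proof.
rewrite /fib (bigID (@off n)) /= addnC; congr addn.
rewrite (bigD1 (dg r)) ?dg_not_off //= big1 ?addn0; first by rewrite ind_dg eqxx.
move=> p /andP [hp hne]; rewrite (not_off_dg hp) ind_dg.
case: eqP => [e|]; last by rewrite muln0.
by move: hne; rewrite (not_off_dg hp) e eqxx.
Qed.

Lemma fib_uniq (u v : expv n) : (forall r, fib u r = fib v r) ->
  (forall p, off p -> u p = v p) -> u = v.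
Proof.
move=> hf ho; apply/ffunP => q; case: (boolP (off q)) => hq; first exact: ho.
rewrite (not_off_dg hq); set a := (val q).1.
have := hf a; rewrite !fib_split (eq_bigr (fun p => v p * ind a p)%N); last first.
  by move=> p hp; rewrite ho.
by move/eqP; rewrite eqn_add2r eqn_pmul2r // => /eqP.
Qed.

Lemma gen_off (p q : upair n) : off q -> gen_ij p q = - 2 * (q == p)%:Z.
Proof.
move=> hq; rewrite /gen_ij.
have ne : forall a : 'I_n, (val q == (a, a)) = false.
  move=> a; apply/negbTE/eqP => e; move: hq; by rewrite /off e ltnn.
rewrite !ne /= mulNr sub0r; by [].
Qed.

Lemma gen_dg (p : upair n) a : off p -> gen_ij p (dg a) = (ind a p)%:Z.
Proof.
move=> hp; rewrite /gen_ij dg_val /ind.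
have -> : ((a, a) == val p) = false.
  apply/negbTE/eqP => e; move: hp; by rewrite /off -e ltnn.
rewrite mulr0 subr0; congr Posz.
by rewrite ![(_, _) == (_, _)]xpair_eqE !andbb ![a == _]eq_sym.
Qed.

Lemma equivL_par (u v : expv n) : equivL u v -> forall p, off p -> (u p %% 2 = v p %% 2)%N.
Proof.
move=> [c hc] p hp; have := hc p.
rewrite (bigD1 p) //= big1 ?addr0; last first.
  by move=> q /andP [_ hq]; rewrite gen_off // eq_sym (negbTE hq) mulr0.
rewrite gen_off // eqxx => h; lia.
Qed.

Lemma par_equivL (u v : expv n) : (forall r, fib u r = fib v r) ->
  (forall p, off p -> (u p %% 2 = v p %% 2)%N) -> equivL u v.
Proof.
move=> hf hp.
exists (fun p => (v p %/ 2)%:Z - (u p %/ 2)%:Z) => q.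
case: (boolP (off q)) => hq.
  rewrite (bigD1 q) //= big1 ?addr0; last first.
    by move=> p /andP [_ hpq]; rewrite gen_off // eq_sym (negbTE hpq) mulr0.
  rewrite gen_off // eqxx; have := hp q hq; lia.
rewrite (not_off_dg hq); set a := (val q).1.
rewrite (eq_bigr (fun p => ((v p %/ 2)%:Z - (u p %/ 2)%:Z) * (ind a p)%:Z)); last first.
  by move=> p hp'; rewrite gen_dg.
have e1 : forall p, off p -> ((v p %/ 2)%:Z - (u p %/ 2)%:Z) * 2 = (v p)%:Z - (u p)%:Z.
  move=> p hp'; have := hp p hp'; lia.
apply: (@mulIf _ 2) => //; rewrite mulr_suml.
rewrite (eq_bigr (fun p => ((v p * ind a p)%N)%:Z - ((u p * ind a p)%N)%:Z)); last first.
  by move=> p hp'; rewrite mulrAC e1 // mulrBl !PoszM.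
rewrite sumrB.
have hS : forall f : upair n -> nat, ((\sum_(p | off p) f p)%N)%:Z = \sum_(p | off p) (f p)%:Z.
  by move=> f; apply: (big_morph Posz PoszD).
rewrite -!hS.
have := hf a; rewrite !fib_split; lia.
Qed.

Lemma par_extend (u v : expv n) : (forall r, fib u r = fib v r) ->
  (forall p, off p -> ((val p).2 < n.-1)%N -> (u p %% 2 = v p %% 2)%N) ->
  forall p, off p -> (u p %% 2 = v p %% 2)%N.
Proof.
move=> hf hp p op; case: (ltnP (val p).2 n.-1) => hl; first exact: hp.
set r := (val p).1.
have hind : ind r p = 1%N.
  rewrite /ind eqxx /=; case: eqP => // e; move: op; by rewrite /off e ltnn.
have := hf r; rewrite !fib_split (bigD1 p) //= (bigD1 p (P := @off n)) //= hind !muln1.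
set X := (\sum_(i | _) _)%N; set Y := (\sum_(i | _) _)%N => h.
have hXY : (X %% 2 = Y %% 2)%N.
  rewrite /X /Y -modn_summ -[in RHS]modn_summ; congr modn; apply: eq_bigr => q /andP [oq qp].
  case hi : (ind r q) => [|c]; first by rewrite !muln0.
  have hq2 : ((val q).2 < n.-1)%N.
    rewrite ltnNge; apply/negP => hq2.
    have e2 : (val q).2 = (val p).2.
      have f : forall x : nat, (x < n)%N -> (n.-1 <= x)%N -> x = n.-1.
        move=> x; case: (n) => //= n' h1 h2; apply/eqP; by rewrite eqn_leq h2 -ltnS h1.
      apply: val_inj; exact: (etrans (f _ (ltn_ord _) hq2) (esym (f _ (ltn_ord _) hl))).
    move: hi; rewrite /ind; case: eqP => h1; case: eqP => h2 //= _.
    - by move: oq; rewrite /off h1 h2 ltnn.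
    - move/negP: qp; apply; apply/eqP/val_inj.
      by rewrite [val q]surjective_pairing [val p]surjective_pairing h1 e2.
    - by move: op; rewrite /off -/r -h2 e2 ltnn.
  by rewrite -modnMml (hp q oq hq2) modnMml.
lia.
Qed.
End Fib.
Lemma big_upair (R : Type) (idx : R) (op : Monoid.com_law idx) (n : nat)
  (C : pred ('I_n * 'I_n)) (F : 'I_n * 'I_n -> R) :
  (forall p, C p -> (p.1 <= p.2)%N) ->
  \big[op/idx]_(q : upair n | C (val q)) F (val q) = \big[op/idx]_(p | C p) F p.
Proof.
move=> hC.
rewrite [RHS](reindex_onto (fun q : upair n => val q) (fun p => upair_of p.1 p.2)).
  by apply: eq_bigl => q; rewrite upair_ofK eqxx andbT.
move=> p hp; rewrite upair_of_val ?hC //; by case: p hp.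
Qed.

Lemma cnt_eq N r : (\sum_(i < N) (i == r :> nat))%N = (r < N)%N.
Proof.
elim: N => [|N IH]; first by rewrite big_ord0.
rewrite big_ord_recr /= IH ltnS.
by case: (ltngtP r N).
Qed.

Lemma cnt1 N r : (\sum_(i < N) \sum_(j < N | (i < j)%N) ((i == r :> nat) + (j == r :> nat)))%N
   = if (r < N)%N then N.-1 else 0%N.
Proof.
elim: N => [|N IH]; first by rewrite big_ord0.
rewrite big_ord_recr /= [X in (_ + X)%N]big1; last by move=> j /=; rewrite ltnNge -ltnS ltn_ord.
rewrite addn0 (eq_bigr (fun i : 'I_N => (\sum_(j < N | (i < j)%N) ((i == r :> nat) + (j == r :> nat)))
    + ((i == r :> nat) + (N == r :> nat)))%N); last first.
  by move=> i _; rewrite big_mkcond big_ord_recr /= -big_mkcond /= ltn_ord.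
rewrite big_split /= IH big_split /= cnt_eq sum_nat_const card_ord.
rewrite ltnS; case: (ltngtP r N) => h /=.
- by rewrite muln0 addn0 addn1 prednK // (leq_ltn_trans (leq0n r) h).
- by rewrite muln0.
- by rewrite muln1.
Qed.

Lemma cnt2 N : (\sum_(i < N) \sum_(j < N | (i < j)%N) 1)%N = 'C(N, 2).
Proof.
elim: N => [|N IH]; first by rewrite big_ord0.
rewrite big_ord_recr /= [X in (_ + X)%N]big1; last by move=> j /=; rewrite ltnNge -ltnS ltn_ord.
rewrite addn0 (eq_bigr (fun i : 'I_N => (\sum_(j < N | (i < j)%N) 1) + 1)%N); last first.
  by move=> i _; rewrite big_mkcond big_ord_recr /= -big_mkcond /= ltn_ord.
by rewrite big_split /= IH sum_nat_const card_ord muln1 binS bin1 addnC.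
Qed.
Section Main.
Variable k : fieldType.
Variable m : nat.
Local Notation n := m.+2.
Local Notation R := (Rn k n).

Definition lst : 'I_n := ord_max.
Definition PP (p : upair n) := off p && ((val p).2 < m.+1)%N.
Definition Aq (q : upair n) : expv n := uvec q + uvec (dg lst).
Definition Bq (q : upair n) : expv n :=
  uvec (upair_of (val q).1 lst) + uvec (upair_of (val q).2 lst).
Definition Fq (q : upair n) (b : bool) : expv n :=
  if PP q then (if b then Aq q else Bq q) else 0.
Definition w (f : {ffun upair n -> bool}) : expv n := \sum_q Fq q (f q).
Definition QQ (q : upair n) (b : bool) := PP q || ~~ b.
Definition phi (s : expv n) : {ffun upair n -> bool} := [ffun q => PP q && odd (s q)].

Lemma xN_ord (i j : 'I_n) : xN k n i j = xv k i j.
Proof.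
rewrite /xN (insubT (fun x => x < n)%N (ltn_ord i)) (insubT (fun x => x < n)%N (ltn_ord j)).
by congr xv; apply: val_inj.
Qed.

Lemma sum_PP (G : nat -> nat -> nat) :
  (\sum_(q : upair n | PP q) G (val q).1 (val q).2)%N =
  (\sum_(i < m.+1) \sum_(j < m.+1 | (i < j)%N) G i j)%N.
Proof.
rewrite (eq_bigl (fun q : upair n => (fun p : 'I_n * 'I_n => ((p.1 < p.2) && (p.2 < m.+1))%N) (val q))) //.
rewrite (@big_upair _ _ _ _ (fun p : 'I_n * 'I_n => ((p.1 < p.2) && (p.2 < m.+1))%N)
   (fun p => G p.1 p.2)); last by move=> p /andP [/ltnW].
rewrite -(@pair_big_dep _ _ _ _ _ predT (fun i j : 'I_n => ((i < j) && (j < m.+1))%N) (fun i j => G i j)) /=.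
rewrite big_ord_recr /= [X in (_ + X)%N]big1 ?addn0; last first.
  move=> j /andP [h1 h2]; move: (ltn_trans h1 h2); by rewrite ltnn.
apply: eq_bigr => i _; rewrite big_mkcond big_ord_recr /= ltnn andbF addn0.
by rewrite [RHS]big_mkcond; apply: eq_bigr => j _; rewrite ltn_ord andbT.
Qed.

Lemma count_l : (\sum_(p | off p) ind lst p)%N = m.+1.
Proof.
rewrite (@big_upair _ _ _ _ (fun p : 'I_n * 'I_n => (p.1 < p.2)%N)
   (fun p => ((p.1 == lst) + (p.2 == lst))%N)); last by move=> p /ltnW.
rewrite -(@pair_big_dep _ _ _ _ _ predT (fun i j : 'I_n => (i < j)%N)
   (fun i j => ((i == lst) + (j == lst))%N)) /=.
by have := cnt1 n lst; rewrite /= ltnSn.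
Qed.

Lemma fib_Fq q b r : fib (Fq q b) r =
  if PP q then (ind r q + (lst == r) * 2)%N else 0%N.
Proof.
rewrite /Fq; case hq: (PP q); last by rewrite /fib big1 // => p _; rewrite zerovE.
have hq1 : ((val q).1 <= lst)%N by rewrite -ltnS ltn_ord.
have hq2 : ((val q).2 <= lst)%N by rewrite -ltnS ltn_ord.
case: b; rewrite /Aq /Bq fibD !fib_uvec ?ind_dg //.
by rewrite /ind !upair_of_val //=; case: (_ == r); case: (_ == r); case: (_ == r).
Qed.

Lemma fib_sum (I : Type) (s : seq I) (P : pred I) (F : I -> expv n) r :
  fib (\sum_(i <- s | P i) F i) r = (\sum_(i <- s | P i) fib (F i) r)%N.
Proof.
apply: (big_morph (fun u : expv n => fib u r)) => [u v|]; first exact: fibD.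
by rewrite /fib big1 // => p _; rewrite zerovE.
Qed.

Lemma fib_w f r : fib (w f) r = if r == lst then ('C(m.+1, 2) * 2)%N else m.
Proof.
rewrite /w fib_sum (eq_bigr _ (fun q _ => fib_Fq q (f q) r)) -big_mkcond /= big_split /=.
rewrite (eq_bigr (fun i : upair n => ((fun a b : nat => (a == r :> nat) + (b == r :> nat)) (val i).1 (val i).2)%N)) //.
rewrite (sum_PP (fun a b : nat => (a == r :> nat) + (b == r :> nat))%N) cnt1.
rewrite (eq_bigr (fun i : upair n => (fun _ _ : nat => 1%N) (val i).1 (val i).2 * ((lst == r) * 2))%N); last by move=> *; rewrite mul1n.
rewrite -big_distrl /= (sum_PP (fun _ _ : nat => 1%N)) cnt2 eq_sym; case: eqP => [->|ne]; first by rewrite ltnn add0n mul1n.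
rewrite mul0n muln0 addn0; have : (r < m.+1)%N.
  by rewrite ltn_neqAle -ltnS ltn_ord andbT; apply/eqP => e; apply: ne; apply: val_inj.
by move=> ->.
Qed.

Definition gg (p : 'I_n * 'I_n) : R :=
  xv k p.1 p.2 * xN k n n.-1 n.-1 + xN k n p.1 n.-1 * xN k n p.2 n.-1.

Lemma mono_Aq q : mono k (Aq q) = xv k (val q).1 (val q).2 * xv k lst lst.
Proof. by rewrite /Aq monoD !mono_uvec /xv upair_ofK. Qed.

Lemma mono_Bq q : mono k (Bq q) = xv k (val q).1 lst * xv k (val q).2 lst.
Proof. by rewrite /Bq monoD !mono_uvec. Qed.

Lemma pn_expand : pn k n = \sum_(f in family QQ) mono k (w f).
Proof.
have e1 : pn k n = \prod_(p : 'I_n * 'I_n | ((p.1 < p.2) && (p.2 < m.+1))%N) gg p.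
  by rewrite /pn pair_big_dep.
have e2 : pn k n = \prod_(q : upair n | PP q) (mono k (Aq q) + mono k (Bq q)).
  rewrite e1 -(@big_upair _ _ _ _ (fun p : 'I_n * 'I_n => ((p.1 < p.2) && (p.2 < m.+1))%N) gg); last first.
    by move=> p /andP [/ltnW].
  apply: eq_big => // q; rewrite mono_Aq mono_Bq /gg.
  by rewrite -[m.+1]/(nat_of_ord lst) !xN_ord.
rewrite e2 big_mkcond /=.
rewrite (eq_bigr (fun q => \sum_(b | QQ q b) mono k (Fq q b))); last first.
  move=> q _; rewrite /QQ /Fq; case: (PP q) => /=.
    by rewrite big_bool.
  by rewrite big_mkcond big_bool /= mono0 add0r.
rewrite bigA_distr_big_dep; apply: eq_bigr => f _.
by rewrite /w mono_sum.
Qed.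

Lemma w_P f p : PP p -> w f p = f p.
Proof.
move=> hp; rewrite /w sumvE (bigD1 p) //= big1 ?addn0.
  rewrite /Fq hp; case: (f p); rewrite /Aq /Bq addvE !uvecE ?eqxx /=.
    have -> : (p == dg lst) = false.
      by apply/negbTE/eqP => e; move: hp; rewrite /PP e /off dg_val ltnn.
    by [].
  have ne : forall x : 'I_n, (p == upair_of x lst) = false.
    move=> x; apply/negbTE/eqP => e; move: hp; rewrite /PP e upair_of_val ?ltnn ?andbF //.
    by rewrite -ltnS ltn_ord.
  by rewrite !ne.
move=> q qp; rewrite /Fq; case: (PP q); last by rewrite zerovE.
case: (f q); rewrite /Aq /Bq addvE !uvecE.
  rewrite eq_sym (negbTE qp).
  have -> : (p == dg lst) = false.
    by apply/negbTE/eqP => e; move: hp; rewrite /PP e /off dg_val ltnn.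
  by [].
have ne : forall x : 'I_n, (p == upair_of x lst) = false.
  move=> x; apply/negbTE/eqP => e; move: hp; rewrite /PP e upair_of_val ?ltnn ?andbF //.
  by rewrite -ltnS ltn_ord.
by rewrite !ne.
Qed.

End Main.
Lemma eqJ_sum_in (k : fieldType) (n : nat) (I : eqType) (r : seq I) (F G : I -> Rn k n) :
  (forall i, i \in r -> eqJ (F i) (G i)) -> eqJ (\sum_(i <- r) F i) (\sum_(i <- r) G i).
Proof.
elim: r => [|a r IH] h; first by rewrite !big_nil; apply: eqJ_refl.
rewrite !big_cons; apply: eqJD; first by apply: h; rewrite inE eqxx.
by apply: IH => i hi; apply: h; rewrite inE hi orbT.
Qed.

Section Core.
Variable k : fieldType.
Variable m : nat.
Local Notation n := m.+2.
Variable b : 'I_n -> nat.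
Variable t : nat.
Variable z : expv n.
Hypothesis Hz : forall p, PP p -> z p = 0%N.
Hypothesis Hfib : forall r,
  (b r + (lst m == r) * (t * 2))%N = (fib z r + (if r == lst m then 'C(m.+1, 2) * 2 else m))%N.
Hypothesis Hbl : b (lst m) = m \/ b (lst m) = m.+1.

Local Notation tl := (uvec (dg (lst m)) *+ t).

Lemma fib_tl r : fib tl r = ((lst m == r) * (t * 2))%N.
Proof. rewrite fibMn fib_uvec ind_dg; lia. Qed.

Lemma fib_wz f r : fib (w f + z) r = (b r + (lst m == r) * (t * 2))%N.
Proof. by rewrite fibD fib_w Hfib addnC. Qed.

Lemma tl_off p : off p -> tl p = 0%N.
Proof.
move=> hp; rewrite mulnvE uvecE.
have -> : (p == dg (lst m)) = false.
  by apply/negbTE/eqP => e; move: hp; rewrite e (negbTE (dg_not_off _)).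
by [].
Qed.

Lemma term s : in_fiber b s -> eqJ (mono k (s + tl)) (mono k (w (phi s) + z)).
Proof.
move=> hs.
have [v1 [e1 f1 o1]] := reduce k (s + tl).
have [v2 [e2 f2 o2]] := reduce k (w (phi s) + z).
have hf : forall r, fib (s + tl) r = fib (w (phi s) + z) r.
  by move=> r; rewrite fib_wz fibD fib_tl; congr addn; exact: hs.
have hpar := par_extend hf.
have hpar' : forall p, off p -> (((s + tl)%R p) %% 2 = ((w (phi s) + z)%R p) %% 2)%N.
  apply: hpar => p op hl.
  have hP : PP p by rewrite /PP op.
  rewrite !addvE tl_off // Hz // w_P // ffunE hP /= !addn0 [in RHS]modn2 oddb modn2.
  by [].
have ev : v1 = v2.
  apply: fib_uniq => [r|p op]; first by rewrite f1 f2 hf.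
  by rewrite o1 // o2 // hpar'.
apply: eqJ_trans e1 _; rewrite ev; exact: eqJ_sym e2.
Qed.

Lemma surj f : f \in family (@QQ m) -> forall S, reps b S -> f \in map (@phi m) S.
Proof.
move=> hf S [Hin Hall Hdist].
have [v [ev fv ov]] := reduce k (w f + z).
have hv : (t <= v (dg (lst m)))%N.
  have h1 := fib_split v (lst m).
  rewrite fv fib_wz eqxx mul1n in h1.
  have h2 : (\sum_(p | off p) v p * ind (lst m) p <= \sum_(p | off p) ind (lst m) p)%N.
    apply: leq_sum => p op.
    have : (v p <= 1)%N by rewrite ov // -ltnS ltn_pmod.
    by move=> hp; rewrite -[X in (_ <= X)%N]mul1n leq_mul2r hp orbT.
  rewrite count_l in h2.
  move: h1 h2; set X := (\sum_(p | _) _)%N; case: Hbl => ->; lia.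
set u : expv n := [ffun q => v q - (q == dg (lst m)) * t]%N.
have vu : v = u + tl.
  apply/ffunP => q; rewrite addvE mulnvE uvecE ffunE.
  by case: eqP => [->|_]; rewrite ?mul1n ?subnK // mul0n subn0 addn0.
have hu : in_fiber b u.
  move=> r; have := fv r; rewrite fib_wz vu fibD fib_tl.
  by move/eqP; rewrite eqn_add2r => /eqP.
have [s hs hequ] := Hall u hu.
apply/mapP; exists s => //.
apply/ffunP => q; rewrite ffunE.
case hq: (PP q) => /=; last first.
  move/familyP: hf => /(_ q); rewrite unfold_in /QQ hq /=; by move/negbTE.
have oq : off q by move: hq => /andP [].
have := equivL_par hequ oq.
have -> : u q = v q.
  rewrite ffunE; have -> : (q == dg (lst m)) = false.
    by apply/negbTE/eqP => e; move: oq; rewrite e (negbTE (dg_not_off _)).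
  by rewrite mul0n subn0.
rewrite ov // addvE Hz // w_P // addn0 !modn2 oddb.
by case: (f q); case: (odd (s q)).
Qed.

Lemma core S : reps b S ->
  eqJ (xv k (lst m) (lst m) ^+ t * psum k S) (mono k z * pn k n).
Proof.
move=> hS; have [Hin Hall Hdist] := hS.
have eL : xv k (lst m) (lst m) ^+ t * psum k S = \sum_(s <- S) mono k (s + tl).
  rewrite /psum mulr_sumr; apply: eq_bigr => s _.
  by rewrite monoD monoX mono_uvec mulrC.
have eR : mono k z * pn k n = \sum_(f in family (@QQ m)) mono k (w f + z).
  rewrite pn_expand mulr_sumr; apply: eq_bigr => f _.
  by rewrite monoD mulrC.
rewrite eL eR; apply: eqJ_trans.
  apply: (eqJ_sum_in (G := fun s => mono k (w (phi s) + z))) => s hs.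
  exact: term (Hin s hs).
apply: eqJ_eq.
rewrite -(big_map (@phi m) predT (fun f => mono k (w f + z))) -big_enum.
apply: perm_big; apply: uniq_perm; last first.
- move=> f; rewrite mem_enum; apply/idP/idP; last by move=> hf; apply: surj.
  move=> /mapP [s _ ->]; apply/familyP => q; rewrite unfold_in /QQ ffunE.
  by case: (PP q).
- exact: enum_uniq.
- apply/(uniqP (phi [ffun => 0%N])) => a c; rewrite !inE size_map => ha hc.
  rewrite !(nth_map [ffun => 0%N]) // => he.
  case: (a =P c) => // ne; exfalso; apply: (Hdist a c ha hc ne).
  have fa := Hin _ (mem_nth [ffun => 0%N] ha).
  have fc := Hin _ (mem_nth [ffun => 0%N] hc).
  have hf : forall r, fib (nth [ffun => 0%N] S a) r = fib (nth [ffun => 0%N] S c) r.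
    by move=> r; rewrite /fib fa fc.
  apply: par_equivL => //; apply: par_extend => // p op hl.
  have hP : PP p by rewrite /PP op.
  have := congr1 (fun g : {ffun upair n -> bool} => g p) he; rewrite !ffunE hP /= => ho.
  by rewrite !modn2 ho.
Qed.

End Core.
Lemma half_le_bin m : ((m.+1)./2 <= 'C(m.+1, 2))%N.
Proof.
rewrite binS bin1; case: m => [|m] //.
apply: leq_trans (leq_addl _ _); rewrite -ltnS.
have := odd_double_half m.+2; rewrite -addnn => h; lia.
Qed.


Unset Implicit Arguments.
Theorem lemma2p17 (k : fieldType) (n : nat) (Hn : (2 <= n)%N) :
  let sigma := ('C(n.-1, 2) - (n.-1)./2)%N in
  (~~ odd n ->
     forall S : seq (expv n), reps (fun _ => (n - 2)%N) S ->
       eqJ (xN k n n.-1 n.-1 ^+ sigma * psum k S) (pn k n)) /\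
  (odd n ->
     forall (i : 'I_n) (S : seq (expv n)),
       reps (fun r : 'I_n => (n - 2 + (r == i))%N) S ->
       eqJ (xN k n n.-1 n.-1 ^+ sigma.+1 * psum k S)
           (xN k n i n.-1 * pn k n)).
Proof.
case: n Hn => [|[|m]] // _ sigma.
have hh := odd_double_half m.+1.
have hb := half_le_bin m.
have hsub : (m.+2 - 2)%N = m by rewrite subSS subSS subn0.
have el : xN k m.+2 m.+1 m.+1 = xv k (lst m) (lst m) := xN_ord k (lst m) (lst m).
split.
- move=> hodd S hS; rewrite el -[pn k _]mul1r -(mono0 k m.+2).
  apply: (@core k m (fun _ => (m.+2 - 2)%N) sigma 0) => //.
  + by move=> p _; rewrite zerovE.
  + move=> r; rewrite /fib big1 ?add0n; last by move=> p _; rewrite zerovE.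
    rewrite hsub eq_sym; case: eqP => _ /=; rewrite ?mul0n ?addn0 ?mul1n //.
    have ho : odd m = false by apply/negbTE; move: hodd; rewrite /= !negbK.
    have hh2 : ((m.+1)./2 * 2 + 1 = m.+1)%N by move: hh; rewrite /= ho -muln2 addnC.
    rewrite /sigma /=; lia.
  + by left.
- move=> hodd i S hS; rewrite el.
  have ez : xN k m.+2 i m.+1 = mono k (uvec (upair_of i (lst m))).
    by rewrite (xN_ord k i (lst m)) xv_mono.
  rewrite ez; apply: (@core k m (fun r => (m.+2 - 2 + (r == i))%N) sigma.+1) => //.
  + move=> p hp; rewrite uvecE; case: eqP => // e; move: hp.
    by rewrite /PP e upair_of_val /= ?ltnn ?andbF // -ltnS ltn_ord.
  + move=> r; rewrite fib_uvec /ind upair_of_val /=; last by rewrite -ltnS ltn_ord.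
    rewrite hsub [r == lst m]eq_sym [i == r]eq_sym.
    case: (lst m =P r) => [<-|_]; rewrite ?mul0n ?addn0 /=; last first.
      by rewrite addnC.
    rewrite mul1n.
    have ho : odd m = true by move: hodd; rewrite /= !negbK.
    have hh2 : ((m.+1)./2 * 2 = m.+1)%N by move: hh; rewrite /= ho -muln2.
    rewrite /sigma /=; case: (i == lst m) => /=; lia.
  + by rewrite hsub; case: (lst m == i); [right; rewrite addn1 | left; rewrite addn0].
Qed.
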